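(* Let $R$ be a unital ring, $\Delta=\{\delta_n\}_{n\in\omega}$ a higher derivation on $R$, and $\overline{\Delta}=\{\overline{\delta_n}\}$ the induced higher derivation on $R\otimes_{\mathbb{Z}}R^{op}$. Then: (1) For every left Gabriel filter $\mathcal{F}_l$ and right Gabriel filter $\mathcal{F}_r$ on $R$, the symmetric filter ${}_l\mathcal{F}_r$ is higher derivation invariant: for every $I\in{}_l\mathcal{F}_r$ and every $n$ there is $J\in{}_l\mathcal{F}_r$ with $\overline{\delta_i}(J)\subseteq I$ for all $i\le n$. (2) For every such symmetric filter ${}_l\mathcal{F}_r$, every $R$-bimodule $M$ and every $\Delta$-higher derivation $D=\{d_n\}$ on $M$, there is a unique $\Delta$-higher derivation $\{\bar d_n\}$ on the symmetric module of quotients ${}_lM_r$ with $\bar d_n\circ q_M=q_M\circ d_n$ for all $n$. (3) If ${}_l\mathcal{F}^1_r\subseteq{}_l\mathcal{F}^2_r$ are two such symmetric filters, then for every $R$-bimodule $M$ and every $\Delta$-higher derivation $D$ on $M$, the extensions $\{d^{(1)}_n\}$ of $D$ to ${}_lM^1_r$ and $\{d^{(2)}_n\}$ to ${}_lM^2_r$ agree: $q_{12}\circ d^{(1)}_n=d^{(2)}_n\circ q_{12}$ for all $n$.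
   Context: $R$-bimodules are identified with right $R\otimes_{\mathbb{Z}}R^{op}$-modules. A higher derivation on a ring $S$ is a family $\{\delta_n\}$ of additive maps with $\delta_0=\mathrm{id}$ and $\delta_n(rs)=\sum_{i=0}^n\delta_i(r)\delta_{n-i}(s)$. The induced higher derivation on $R\otimes_{\mathbb{Z}}R^{op}$ is $\overline{\delta_n}(r\otimes s)=\sum_{i=0}^n\delta_i(r)\otimes\delta_{n-i}(s)$. For an $R$-bimodule $M$, a $\Delta$-higher derivation is a family $\{d_n\}$ of additive maps $M\to M$ with $d_0=\mathrm{id}_M$, $d_n(xr)=\sum_{i=0}^n d_i(x)\delta_{n-i}(r)$ and $d_n(rx)=\sum_{i=0}^n\delta_i(r)d_{n-i}(x)$ for all $x\in M$, $r\in R$ (equivalently a higher $\overline{\Delta}$-derivation of $M$ as right $R\otimes R^{op}$-module). Given a left Gabriel filter $\mathcal{F}_l$ (hereditary torsion theory $\tau_l$ on left modules, torsion class $\mathcal{T}_l$) and a right Gabriel filter $\mathcal{F}_r$ (torsion class $\mathcal{T}_r$), the symmetric torsion theory ${}_l\tau_r$ is the hereditary torsion theory on $R$-bimodules whose torsion class is ${}_l\mathcal{T}_r=\mathcal{T}_l\cap\mathcal{T}_r$ (bimodules torsion both as left and as right modules); ${}_l\mathcal{F}_r$ is its Gabriel filter of right ideals of $R\otimes_{\mathbb{Z}}R^{op}$. The symmetric module of quotients is ${}_lM_r=\varinjlim_{K\in{}_l\mathcal{F}_r}\mathrm{Hom}(K,M/{}_l\mathcal{T}_r(M))$ (bimodule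 homomorphisms), with the canonical map $q_M:M\to{}_lM_r$ whose kernel is ${}_l\mathcal{T}_r(M)$. In (3), $q_{12}:{}_lM^1_r\to{}_lM^2_r$ is the canonical map induced by the inclusion of filters. *)

(* Defs.v *)
From mathcomp Require Import all_boot all_algebra.
Import GRing.Theory.

Set Implicit Arguments.
Unset Strict Implicit.
Unset Printing Implicit Defensive.

Local Open Scope ring_scope.

Definition psubset (T : Type) (A B : T -> Prop) : Prop := forall x, A x -> B x.
Definition pinter (T : Type) (A B : T -> Prop) : T -> Prop := fun x => A x /\ B x.
Definition pfull (T : Type) : T -> Prop := fun _ => True.

Section RingSide.
Variable R : pzRingType.

Definition is_left_ideal (I : R -> Prop) : Prop :=
  [/\ I 0, (forall x y, I x -> I y -> I (x - y)) & (forall r x, I x -> I (r * x))].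

Definition is_right_ideal (I : R -> Prop) : Prop :=
  [/\ I 0, (forall x y, I x -> I y -> I (x - y)) & (forall r x, I x -> I (x * r))].

Definition lcolon (I : R -> Prop) (a : R) : R -> Prop := fun x => I (x * a).
Definition rcolon (I : R -> Prop) (a : R) : R -> Prop := fun x => I (a * x).

(* Gabriel filter of left ideals (Stenstrom, axioms T1-T4, nonempty). *)
Definition left_Gabriel_filter (F : (R -> Prop) -> Prop) : Prop :=
  (forall I, F I -> is_left_ideal I) /\
  [/\ F (@pfull R),
      (forall I J, F I -> is_left_ideal J -> psubset I J -> F J),
      (forall I J, F I -> F J -> F (pinter I J)),
      (forall I a, F I -> F (lcolon I a)) &
      (forall I J, is_left_ideal I -> F J ->
          (forall a, J a -> F (lcolon I a)) -> F I)].

Definition right_Gabriel_filter (F : (R -> Prop) -> Prop) : Prop :=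
  (forall I, F I -> is_right_ideal I) /\
  [/\ F (@pfull R),
      (forall I J, F I -> is_right_ideal J -> psubset I J -> F J),
      (forall I J, F I -> F J -> F (pinter I J)),
      (forall I a, F I -> F (rcolon I a)) &
      (forall I J, is_right_ideal I -> F J ->
          (forall a, J a -> F (rcolon I a)) -> F I)].

Definition is_higher_derivation (d : nat -> R -> R) : Prop :=
  [/\ (forall r, d 0%N r = r),
      (forall n r s, d n (r + s) = d n r + d n s) &
      (forall n r s, d n (r * s) = \sum_(i < n.+1) d i r * d (n - i)%N s)].
End RingSide.

(* The enveloping ring E = R (x)_Z R^op, given by its universal property:
   iota a b stands for a (x) b. *)
Definition biadditive (R : pzRingType) (A : zmodType) (f : R -> R -> A) : Prop :=
  (forall a a' b, f (a + a') b = f a b + f a' b) /\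
  (forall a b b', f a (b + b') = f a b + f a b').

Definition is_additive (A B : zmodType) (g : A -> B) : Prop :=
  forall x y, g (x + y) = g x + g y.

Definition is_enveloping_tensor (R E : pzRingType) (iota : R -> R -> E) : Prop :=
  [/\ biadditive iota,
      iota 1 1 = 1,
      (* (a (x) b)(c (x) d) = ac (x) (b *_op d) = ac (x) db *)
      (forall a b c d, iota a b * iota c d = iota (a * c) (d * b)) &
      (forall (A : zmodType) (f : R -> R -> A), biadditive f ->
         exists g : E -> A,
           [/\ is_additive g, (forall a b, g (iota a b) = f a b) &
               (forall g' : E -> A, is_additive g' ->
                  (forall a b, g' (iota a b) = f a b) -> forall x, g' x = g x)])].

Definition is_induced_hder (R E : pzRingType) (iota : R -> R -> E)
    (d : nat -> R -> R) (dbar : nat -> E -> E) : Prop :=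
  (forall n, is_additive (dbar n)) /\
  (forall n a b, dbar n (iota a b) = \sum_(i < n.+1) iota (d i a) (d (n - i)%N b)).

(* Bimodules = right E-modules = left E^c-modules. *)
Section Bimod.
Variables (R E : pzRingType) (iota : R -> R -> E).

Definition eact (M : lmodType E^c) (m : M) (e : E) : M := (e : E^c) *: m.
Definition ract (M : lmodType E^c) (m : M) (r : R) : M := eact m (iota r 1).
Definition lact (M : lmodType E^c) (r : R) (m : M) : M := eact m (iota 1 r).

Definition is_Delta_hder (d : nat -> R -> R) (M : lmodType E^c)
    (D : nat -> M -> M) : Prop :=
  [/\ (forall x, D 0%N x = x),
      (forall n, is_additive (D n)),
      (forall n x r, D n (ract x r) = \sum_(i < n.+1) ract (D i x) (d (n - i)%N r)) &
      (forall n x r, D n (lact r x) = \sum_(i < n.+1) lact (d i r) (D (n - i)%N x))].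

Definition is_right_idealE (K : E -> Prop) : Prop :=
  [/\ K 0, (forall x y, K x -> K y -> K (x - y)) & (forall a x, K x -> K (x * a))].

(* The symmetric filter lFr: right ideals K of E such that the bimodule E/K
   is torsion as a left module (w.r.t. Fl) and as a right module (w.r.t. Fr).
   The left annihilator of the class of x in E/K is {r | x (1 (x) r) \in K},
   its right annihilator is {r | x (r (x) 1) \in K}. *)
Definition sym_filter (Fl Fr : (R -> Prop) -> Prop) (K : E -> Prop) : Prop :=
  is_right_idealE K /\
  (forall x, Fl (fun r => K (x * iota 1 r)) /\ Fr (fun r => K (x * iota r 1))).

Section Quot.
Variables (Fl Fr : (R -> Prop) -> Prop) (M : lmodType E^c).

Definition sym_torsion (m : M) : Prop :=
  sym_filter Fl Fr (fun a => eact m a = 0).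

(* f : E -> M is a lift of a homomorphism of right E-modules K -> M/lTr(M). *)
Definition hom_lift (K : E -> Prop) (f : E -> M) : Prop :=
  (forall x y, K x -> K y -> sym_torsion (f (x + y) - f x - f y)) /\
  (forall x a, K x -> sym_torsion (f (x * a) - eact (f x) a)).

(* Two elements of Hom(K,M/T(M)) and Hom(K',M/T(M)) have the same image in
   the direct limit iff they agree on some K'' in lFr, K'' <= K /\ K'. *)
Definition germ_eq (K : E -> Prop) (f : E -> M) (K' : E -> Prop) (f' : E -> M) : Prop :=
  exists K'', [/\ sym_filter Fl Fr K'', psubset K'' (pinter K K') &
                  forall x, K'' x -> sym_torsion (f x - f' x)].

(* L (with phi K f = the image of [f] in Hom(K, M/T(M))) is the symmetric
   module of quotients lM_r = lim_{K in lFr} Hom(K, M/lTr(M)), with its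
   canonical right E-module (= R-bimodule) structure. *)
Definition is_sym_module_of_quotients (L : lmodType E^c)
    (phi : (E -> Prop) -> (E -> M) -> L) : Prop :=
  [/\ (forall K f K' f', sym_filter Fl Fr K -> hom_lift K f ->
         sym_filter Fl Fr K' -> hom_lift K' f' ->
         (phi K f = phi K' f' <-> germ_eq K f K' f')),
      (forall y : L, exists K f, [/\ sym_filter Fl Fr K, hom_lift K f & phi K f = y]),
      (forall K f K' f', sym_filter Fl Fr K -> hom_lift K f ->
         sym_filter Fl Fr K' -> hom_lift K' f' ->
         phi K f + phi K' f' = phi (pinter K K') (fun x => f x + f' x)) &
      (forall K f a, sym_filter Fl Fr K -> hom_lift K f ->
         eact (phi K f) a = phi (fun x => K (a * x)) (fun x => f (a * x)))].

Definition qmap (L : lmodType E^c) (phi : (E -> Prop) -> (E -> M) -> L) (m : M) : L :=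
  phi (@pfull E) (fun x => eact m x).

End Quot.
End Bimod.

(* Main.v *)
Require Import Defs.
From mathcomp Require Import all_boot all_algebra.
From Stdlib Require Import FunctionalExtensionality PropExtensionality ClassicalEpsilon.
From mathcomp Require Import zify.
Import GRing.Theory.
Local Open Scope ring_scope.
Section Sums.
Variable V : zmodType.

Lemma sum_rev n (F : nat -> V) :
  \sum_(i < n.+1) F i = \sum_(i < n.+1) F (n - i)%N.
Proof.
rewrite (reindex_inj rev_ord_inj) /=; apply: eq_bigr => i _; by rewrite subSS.
Qed.

Lemma sum_tri n (F : nat -> nat -> V) :
  \sum_(m < n.+1) \sum_(j < m.+1) F j (m - j)%N =
  \sum_(j < n.+1) \sum_(k < (n - j).+1) F j k.
Proof.
elim: n => [|n IH].
  by rewrite !big_ord1.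
rewrite big_ord_recr /= IH.
rewrite [RHS](eq_bigr (fun j : 'I_n.+2 => \sum_(k < (n.+1 - j)%N) F j k + F j (n.+1 - j)%N));
  last by move=> j _; rewrite big_ord_recr.
rewrite big_split /=; congr (_ + _).
rewrite [RHS]big_ord_recr /= subnn big_ord0 addr0.
apply: eq_bigr => j _ /=; by rewrite subSn // -ltnS.
Qed.

Lemma sum_tri_swap n (F : nat -> nat -> V) :
  \sum_(i < n.+1) \sum_(j < (n - i).+1) F i j =
  \sum_(j < n.+1) \sum_(i < (n - j).+1) F i j.
Proof.
rewrite -sum_tri.
have := sum_tri n (fun j i => F i j); rewrite /= => <-.
apply: eq_bigr => m _.
rewrite (sum_rev _ (fun j => F j (m - j)%N)); apply: eq_bigr => j _.
by rewrite subKn // -ltnS.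
Qed.
End Sums.

Lemma sub3D (V : zmodType) (a a' b b' c c' : V) : a + a' - (b + b') - (c + c') = (a - b - c) + (a' - b' - c').
Proof. rewrite (opprD b) (opprD c) (addrACA a a'). by rewrite (addrACA (a - b)). Qed.
Lemma sub2D (V : zmodType) (a a' b b' : V) : a + a' - (b + b') = (a - b) + (a' - b').
Proof. by rewrite (opprD b) (addrACA a a'). Qed.

Section Env.
Variables (R E : pzRingType) (iota : R -> R -> E).
Hypothesis Hiota : is_enveloping_tensor iota.
Variable d : nat -> R -> R.
Hypothesis Hd : is_higher_derivation d.
Variable dbar : nat -> E -> E.
Hypothesis Hdbar : is_induced_hder iota d dbar.

Lemma iotaDl a a' b : iota (a + a') b = iota a b + iota a' b.
Proof. by case: Hiota => [[H _]] _ _ _; apply: H. Qed.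
Lemma iotaDr a b b' : iota a (b + b') = iota a b + iota a b'.
Proof. by case: Hiota => [[_ H]] _ _ _; apply: H. Qed.
Lemma iotaM a b c e : iota a b * iota c e = iota (a * c) (e * b).
Proof. by case: Hiota => _ _ H _; apply: H. Qed.
Lemma iota0l b : iota 0 b = 0.
Proof. by apply: (@addrI _ (iota 0 b)); rewrite -iotaDl !addr0. Qed.
Lemma iota0r a : iota a 0 = 0.
Proof. by apply: (@addrI _ (iota a 0)); rewrite -iotaDr !addr0. Qed.
Lemma iotaNl a b : iota (- a) b = - iota a b.
Proof. by apply: (@addrI _ (iota a b)); rewrite -iotaDl !subrr iota0l. Qed.
Lemma iotaNr a b : iota a (- b) = - iota a b.
Proof. by apply: (@addrI _ (iota a b)); rewrite -iotaDr !subrr iota0r. Qed.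
Lemma iota_suml n (f : 'I_n -> R) b : iota (\sum_(i < n) f i) b = \sum_(i < n) iota (f i) b.
Proof. exact: (big_morph (fun a => iota a b) (fun a a' => iotaDl a a' b) (iota0l b)). Qed.
Lemma iota_sumr n (f : 'I_n -> R) a : iota a (\sum_(i < n) f i) = \sum_(i < n) iota a (f i).
Proof. exact: (big_morph (fun b => iota a b) (fun b b' => iotaDr a b b') (iota0r a)). Qed.

Lemma Euniq (A : zmodType) (g : E -> A) : is_additive g ->
  (forall a b, g (iota a b) = 0) -> forall x, g x = 0.
Proof.
move=> ga g0 x.
case: Hiota => _ _ _ U.
have bz : biadditive (fun (_ : R) (_ : R) => (0 : A)) by split=> *; rewrite addr0.
case: (U A _ bz) => g1 [_ _ Hu].
rewrite (Hu g ga g0 x); symmetry; apply: Hu => // ? ?; by rewrite addr0.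
Qed.

Lemma additive0 (A B : zmodType) (g : A -> B) : is_additive g -> g 0 = 0.
Proof. by move=> ga; apply: (@addrI _ (g 0)); rewrite -ga !addr0. Qed.
Lemma additiveN (A B : zmodType) (g : A -> B) : is_additive g -> forall x, g (- x) = - g x.
Proof. by move=> ga x; apply: (@addrI _ (g x)); rewrite -ga !subrr additive0. Qed.
Lemma additiveB (A B : zmodType) (g : A -> B) : is_additive g -> forall x y, g (x - y) = g x - g y.
Proof. by move=> ga x y; rewrite ga additiveN. Qed.
Lemma additive_sum (A B : zmodType) (g : A -> B) : is_additive g ->
  forall n (F : 'I_n -> A), g (\sum_(i < n) F i) = \sum_(i < n) g (F i).
Proof. move=> ga n F; apply: (@big_morph _ _ g 0 +%R 0 +%R) => //; exact: additive0. Qed.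

Arguments additive0 {A B g}. Arguments additiveN {A B g}. Arguments additiveB {A B g}. Arguments additive_sum {A B g}.

Lemma Eext (A : zmodType) (g g' : E -> A) : is_additive g -> is_additive g' ->
  (forall a b, g (iota a b) = g' (iota a b)) -> forall x, g x = g' x.
Proof.
move=> ga ga' H x; apply/eqP; rewrite -subr_eq0; apply/eqP.
apply: (@Euniq _ (fun x => g x - g' x)) => [u v|a b]; last by rewrite H subrr.
by rewrite ga ga' addrACA opprD.
Qed.

Lemma dbarD n : is_additive (dbar n).
Proof. by case: Hdbar. Qed.
Lemma dbar_iota n a b : dbar n (iota a b) = \sum_(i < n.+1) iota (d i a) (d (n - i) b).
Proof. by case: Hdbar. Qed.
Lemma dD n : is_additive (d n).
Proof. by case: Hd => _ H _ x y; apply: H. Qed.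
Lemma dM n r s : d n (r * s) = \sum_(i < n.+1) d i r * d (n - i) s.
Proof. by case: Hd. Qed.
Lemma d0 r : d 0%N r = r.
Proof. by case: Hd. Qed.

Lemma d1 n : d n 1 = if n is 0 then 1 else 0.
Proof.
elim/ltn_ind: n => [[|n]] IH; first exact: d0.
have := dM n.+1 1 1; rewrite mulr1 big_ord_recr big_ord_recl /=.
rewrite subn0 subnn !d0 mul1r mulr1.
rewrite big1 ?addr0 => [|i _].
  by move=> h; apply: (@addrI _ (d n.+1 1)); rewrite -h addr0.
rewrite /bump /= IH; last by rewrite ltnS.
by rewrite mul0r.
Qed.

Lemma dbar0 x : dbar 0%N x = x.
Proof.
have := @Eext E (dbar 0%N) id (dbarD 0%N) (fun _ _ => erefl) _ x; apply=> a b.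
by rewrite dbar_iota big_ord1 /= !d0.
Qed.

Lemma dbar_iotal n r : dbar n (iota r 1) = iota (d n r) 1.
Proof.
rewrite dbar_iota big_ord_recr /= subnn d1 big1 ?add0r // => i _.
have: (0 < n - i)%N by rewrite subn_gt0.
by case: (n - i)%N => // k _; rewrite d1 iota0r.
Qed.

Lemma dbar_iotar n r : dbar n (iota 1 r) = iota 1 (d n r).
Proof.
rewrite dbar_iota big_ord_recl /= subn0 d1 big1 ?addr0 // => i _.
by rewrite /bump /= d1 iota0l.
Qed.

Lemma iota_split a b : iota a 1 * iota 1 b = iota a b.
Proof. by rewrite iotaM !mulr1. Qed.

Lemma sum_ideal_ind (P : E -> Prop) n (F : 'I_n -> E) :
  P 0 -> (forall x y, P x -> P y -> P (x + y)) -> (forall i, P (F i)) -> P (\sum_(i < n) F i).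
Proof. move=> P0 PD PF; by elim/big_ind: _ => // i _. Qed.

Definition leib (x : E) := forall n y, dbar n (x * y) = \sum_(i < n.+1) dbar i x * dbar (n - i) y.

Lemma leib_mul x1 x2 : leib x1 -> leib x2 -> leib (x1 * x2).
Proof.
move=> L1 L2 n y; rewrite -mulrA L1.
rewrite (eq_bigr (fun i : 'I_n.+1 => \sum_(j < (n - i).+1) dbar i x1 * dbar j x2 * dbar (n - i - j) y)); last first.
  by move=> i _; rewrite L2 mulr_sumr; apply: eq_bigr => j _; rewrite mulrA.
rewrite -(@sum_tri _ n (fun i j => dbar i x1 * dbar j x2 * dbar (n - i - j) y)).
apply: eq_bigr => k _; rewrite L1 mulr_suml; apply: eq_bigr => i _.
have := ltn_ord i; have := ltn_ord k => ? ?; congr (_ * dbar _ y); lia.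
Qed.

Lemma leib_ext x : (forall n a b, dbar n (x * iota a b) = \sum_(i < n.+1) dbar i x * dbar (n - i) (iota a b)) -> leib x.
Proof.
move=> H n y.
apply: (@Eext _ (fun y => dbar n (x * y)) (fun y => \sum_(i < n.+1) dbar i x * dbar (n - i) y)) => //.
  by move=> u v /=; rewrite mulrDr dbarD.
by move=> u v /=; rewrite -big_split; apply: eq_bigr => i _; rewrite dbarD mulrDr.
Qed.

Lemma leib_l a : leib (iota a 1).
Proof.
apply: leib_ext => n c e; rewrite iotaM mulr1 dbar_iota.
rewrite [RHS](eq_bigr (fun i : 'I_n.+1 => \sum_(w < (n - i).+1) iota (d i a * d w c) (d (n - i - w) e))); last first.
  by move=> i _; rewrite dbar_iotal dbar_iota mulr_sumr; apply: eq_bigr => w _; rewrite iotaM mulr1.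
rewrite -(@sum_tri _ n (fun i w => iota (d i a * d w c) (d (n - i - w) e))).
apply: eq_bigr => k _; rewrite dM iota_suml; apply: eq_bigr => i _.
have := ltn_ord i; have := ltn_ord k => ? ?; congr (iota _ (d _ e)); lia.
Qed.

Lemma leib_r b : leib (iota 1 b).
Proof.
apply: leib_ext => n c e; rewrite iotaM mul1r dbar_iota.
rewrite [RHS](eq_bigr (fun i : 'I_n.+1 => \sum_(w < (n - i).+1) iota (d w c) (d (n - i - w) e * d i b))); last first.
  by move=> i _; rewrite dbar_iotar dbar_iota mulr_sumr; apply: eq_bigr => w _; rewrite iotaM mul1r.
rewrite (@sum_tri_swap _ n (fun i w => iota (d w c) (d (n - i - w) e * d i b))).
apply: eq_bigr => k _; rewrite dM iota_sumr.
rewrite (@sum_rev _ (n - k) (fun i => iota (d k c) (d (n - i - k) e * d i b))).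
apply: eq_bigr => i _.
have := ltn_ord i; have := ltn_ord k => ? ?.
have -> : (n - (n - k - i) - k = i)%N by lia.
done.
Qed.

Lemma leibE x n y : dbar n (x * y) = \sum_(i < n.+1) dbar i x * dbar (n - i) y.
Proof.
apply: (@Eext _ (fun x => dbar n (x * y)) (fun x => \sum_(i < n.+1) dbar i x * dbar (n - i) y)) => //.
- by move=> u v /=; rewrite mulrDl dbarD.
- by move=> u v /=; rewrite -big_split; apply: eq_bigr => i _; rewrite dbarD mulrDl.
- by move=> a b; rewrite -iota_split; apply: leib_mul; [apply: leib_l | apply: leib_r].
Qed.

Section Mod.
Variable M : lmodType E^c.

Lemma eactA (m : M) x y : eact m (x * y) = eact (eact m x) y.
Proof. rewrite /eact -scalerA; reflexivity. Qed.
Lemma eactDl (m m' : M) e : eact (m + m') e = eact m e + eact m' e.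
Proof. exact: scalerDr. Qed.
Lemma eactDr (m : M) e e' : eact m (e + e') = eact m e + eact m e'.
Proof. exact: scalerDl. Qed.
Lemma eact0l e : eact (0 : M) e = 0.
Proof. exact: scaler0. Qed.
Lemma eact0r (m : M) : eact m 0 = 0.
Proof. exact: scale0r. Qed.
Lemma eact1 (m : M) : eact m 1 = m.
Proof. exact: scale1r. Qed.
Lemma eactNl (m : M) e : eact (- m) e = - eact m e.
Proof. exact: scalerN. Qed.
Lemma eactBl (m m' : M) e : eact (m - m') e = eact m e - eact m' e.
Proof. exact: scalerBr. Qed.
Lemma eactBr (m : M) e e' : eact m (e - e') = eact m e - eact m e'.
Proof. exact: scalerBl. Qed.
Lemma eact_suml n (F : 'I_n -> M) e : eact (\sum_(i < n) F i) e = \sum_(i < n) eact (F i) e.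
Proof. exact: scaler_sumr. Qed.
Lemma eact_sumr n (F : 'I_n -> E) (m : M) : eact m (\sum_(i < n) F i) = \sum_(i < n) eact m (F i).
Proof. exact: scaler_suml. Qed.

Variable D : nat -> M -> M.
Hypothesis HD : is_Delta_hder iota d D.

Definition Drule e := forall n m, D n (eact m e) = \sum_(i < n.+1) eact (D i m) (dbar (n - i) e).

Lemma DD n : is_additive (D n).
Proof. by case: HD. Qed.
Lemma D0 m : D 0%N m = m.
Proof. by case: HD. Qed.

Lemma Drule_l a : Drule (iota a 1).
Proof.
move=> n m; case: HD => _ _ H _; rewrite [LHS]H; apply: eq_bigr => i _.
by rewrite dbar_iotal.
Qed.

Lemma Drule_r b : Drule (iota 1 b).
Proof.
move=> n m; case: HD => _ _ _ H; rewrite [LHS]H.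
rewrite (@sum_rev _ n (fun i => eact (D i m) (dbar (n - i) (iota 1 b)))).
apply: eq_bigr => i _; by rewrite dbar_iotar subKn // -ltnS.
Qed.

Lemma Drule_mul e1 e2 : Drule e1 -> Drule e2 -> Drule (e1 * e2).
Proof.
move=> R1 R2 n m; rewrite eactA R2.
rewrite (eq_bigr (fun i : 'I_n.+1 => \sum_(j < i.+1) eact (D j m) (dbar (i - j) e1 * dbar (n - j - (i - j)) e2))); last first.
  move=> i _; rewrite R1 eact_suml; apply: eq_bigr => j _; rewrite eactA.
  have := ltn_ord i; have := ltn_ord j => ? ?.
  by have -> : (n - j - (i - j) = n - i)%N by lia.
rewrite (@sum_tri _ n (fun j k => eact (D j m) (dbar k e1 * dbar (n - j - k) e2))).
apply: eq_bigr => k _; rewrite leibE eact_sumr; apply: eq_bigr => i _.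
have := ltn_ord i; have := ltn_ord k => ? ?.
have -> : (n - k - i = n - (k + i))%N by lia.
done.
Qed.

Lemma DruleE e : Drule e.
Proof.
move=> n m.
apply: (@Eext _ (fun e => D n (eact m e)) (fun e => \sum_(i < n.+1) eact (D i m) (dbar (n - i) e))) => //.
- by move=> u v /=; rewrite eactDr DD.
- by move=> u v /=; rewrite -big_split; apply: eq_bigr => i _; rewrite dbarD eactDr.
- by move=> a b; rewrite -iota_split; apply: Drule_mul; [apply: Drule_l | apply: Drule_r].
Qed.

Lemma DN n : forall m, D n (- m) = - D n m.
Proof. exact: (@additiveN _ _ _ (DD n)). Qed.
Lemma DB n m m' : D n (m - m') = D n m - D n m'.
Proof. exact: (@additiveB _ _ _ (DD n)). Qed.
Lemma Dz n : D n 0 = 0.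
Proof. exact: (@additive0 _ _ _ (DD n)). Qed.
End Mod.
Arguments DN {M D}. Arguments DB {M D}. Arguments Dz {M D}.
Arguments DruleE {M D}. Arguments DD {M D}. Arguments D0 {M D}.

Lemma Pext (T : Type) (P : (T -> Prop) -> Prop) (A B : T -> Prop) :
  P A -> (forall x, A x <-> B x) -> P B.
Proof.
move=> PA H; have -> : B = A; last exact: PA.
by apply: functional_extensionality => x; apply: propositional_extensionality; split => /H.
Qed.
Arguments Pext {T P A B}.

Lemma iota1M r s : iota 1 r * iota 1 s = iota 1 (s * r).
Proof. by rewrite iotaM mulr1. Qed.
Lemma iotaM1 r s : iota r 1 * iota s 1 = iota (r * s) 1.
Proof. by rewrite iotaM mulr1. Qed.

Lemma riD (K : E -> Prop) : is_right_idealE K -> forall x y, K x -> K y -> K (x + y).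
Proof.
case=> K0 KB _ x y Kx Ky; have := KB _ _ Kx (KB _ _ K0 Ky); by rewrite sub0r opprK.
Qed.
Lemma riM (K : E -> Prop) : is_right_idealE K -> forall x a, K x -> K (x * a).
Proof. by case=> _ _ H x a /H. Qed.
Lemma ri0 (K : E -> Prop) : is_right_idealE K -> K 0.
Proof. by case. Qed.
Lemma riB (K : E -> Prop) : is_right_idealE K -> forall x y, K x -> K y -> K (x - y).
Proof. by case=> _ H _. Qed.
Lemma ri_sum (K : E -> Prop) : is_right_idealE K -> forall n (F : 'I_n -> E),
  (forall i, K (F i)) -> K (\sum_(i < n) F i).
Proof. move=> HK n F H; apply: sum_ideal_ind => //; [exact: ri0 | exact: riD]. Qed.

Lemma iotaBr a b b' : iota a (b - b') = iota a b - iota a b'.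
Proof. by rewrite iotaDr iotaNr. Qed.
Lemma iotaBl a a' b : iota (a - a') b = iota a b - iota a' b.
Proof. by rewrite iotaDl iotaNl. Qed.

Lemma lid_of (K : E -> Prop) x : is_right_idealE K -> is_left_ideal (fun r => K (x * iota 1 r)).
Proof.
move=> HK; split.
- by rewrite iota0r mulr0; exact: ri0.
- by move=> r s Kr Ks /=; rewrite iotaBr mulrBr; exact: riB.
- by move=> r s Ks /=; rewrite -iota1M mulrA; exact: riM.
Qed.
Lemma rid_of (K : E -> Prop) x : is_right_idealE K -> is_right_ideal (fun r => K (x * iota r 1)).
Proof.
move=> HK; split.
- by rewrite iota0l mulr0; exact: ri0.
- by move=> r s Kr Ks /=; rewrite iotaBl mulrBr; exact: riB.
- by move=> r s Ks /=; rewrite -iotaM1 mulrA; exact: riM.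
Qed.

Section Filt.
Variables Fl Fr : (R -> Prop) -> Prop.
Hypothesis HFl : left_Gabriel_filter Fl.
Hypothesis HFr : right_Gabriel_filter Fr.
Local Notation lF := (sym_filter iota Fl Fr).

Lemma sf_ideal K : lF K -> is_right_idealE K.
Proof. by case. Qed.

Lemma sf_full : lF (@pfull E).
Proof.
case: HFl => _ [Hl _ _ _ _]; case: HFr => _ [Hr _ _ _ _].
by split; [split | move=> x; split].
Qed.

Lemma sf_up K K' : lF K -> is_right_idealE K' -> psubset K K' -> lF K'.
Proof.
case: HFl => _ [_ Hl _ _ _]; case: HFr => _ [_ Hr _ _ _].
move=> [HK H] HK' sub; split => // x; have [H1 H2] := H x; split.
- by apply: (Hl _ _ H1); [exact: lid_of | move=> r /sub].
- by apply: (Hr _ _ H2); [exact: rid_of | move=> r /sub].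
Qed.

Lemma sf_cap K K' : lF K -> lF K' -> lF (pinter K K').
Proof.
case: HFl => _ [_ _ Hl _ _]; case: HFr => _ [_ _ Hr _ _].
move=> [HK H] [HK' H']; split.
  split; first by split; exact: ri0.
  - by move=> x y [? ?] [? ?]; split; exact: riB.
  - by move=> a x [? ?]; split; exact: riM.
move=> x; have [H1 H2] := H x; have [H1' H2'] := H' x; split.
- exact: (Hl _ _ H1 H1').
- exact: (Hr _ _ H2 H2').
Qed.

Lemma sf_colon K a : lF K -> lF (fun x => K (a * x)).
Proof.
move=> [HK H]; split.
  split; first by rewrite mulr0; exact: ri0.
  - by move=> x y ? ?; rewrite mulrBr; exact: riB.
  - by move=> b x ?; rewrite mulrA; exact: riM.
move=> x; have [H1 H2] := H (a * x); split.
- by apply: (Pext H1) => r; rewrite mulrA.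
- by apply: (Pext H2) => r; rewrite mulrA.
Qed.

Lemma sf_T4 K K' : is_right_idealE K -> lF K' ->
  (forall a, K' a -> lF (fun x => K (a * x))) -> lF K.
Proof.
case: HFl => _ [_ _ _ _ Tl]; case: HFr => _ [_ _ _ _ Tr].
move=> HK [HK' H'] H; split => // x; have [H1 H2] := H' x; split.
- apply: (Tl _ _ (lid_of _ x HK) H1) => r Hr.
  have [G1 _] := (H _ Hr).2 1.
  apply: (Pext G1) => s; rewrite /lcolon -iota1M mul1r mulrA; done.
- apply: (Tr _ _ (rid_of _ x HK) H2) => r Hr.
  have [_ G2] := (H _ Hr).2 1.
  apply: (Pext G2) => s; rewrite /rcolon -iotaM1 mul1r mulrA; done.
Qed.

Lemma ri_colon (K : E -> Prop) a : is_right_idealE K -> is_right_idealE (fun x => K (a * x)).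
Proof.
move=> HK; split.
- by rewrite mulr0; exact: ri0.
- by move=> x y ? ?; rewrite mulrBr; exact: riB.
- by move=> b x ?; rewrite mulrA; exact: riM.
Qed.

Arguments sf_up {K K'}. Arguments sf_ideal {K}. Arguments sf_cap {K K'}. Arguments sf_colon {K} a. Arguments sf_T4 {K K'}.
Arguments ri_colon {K} a.

Definition Jk (K : E -> Prop) k := fun x => forall i, (i <= k)%N -> K (dbar i x).

Lemma dbarz n : dbar n 0 = 0.
Proof. exact: (@additive0 _ _ _ (dbarD n)). Qed.
Lemma dbarB n x y : dbar n (x - y) = dbar n x - dbar n y.
Proof. exact: (@additiveB _ _ _ (dbarD n)). Qed.

Lemma Jk_ideal K k : is_right_idealE K -> is_right_idealE (Jk K k).
Proof.
move=> HK; split.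
- by move=> i _; rewrite dbarz; exact: ri0.
- move=> x y Hx Hy i Hi; rewrite dbarB; exact: (riB _ HK _ _ (Hx i Hi) (Hy i Hi)).
- move=> a x Hx i Hi; rewrite leibE; apply: ri_sum => // j.
  apply: riM => //; apply: (Hx j); apply: leq_trans Hi; by rewrite -ltnS.
Qed.

Arguments Jk_ideal {K} k.

Lemma Jk_sf K k : lF K -> lF (Jk K k).
Proof.
move=> HK; have HKi := sf_ideal HK.
elim: k => [|k IH].
  apply: (sf_up HK (Jk_ideal 0 HKi)) => x Kx i; rewrite leqn0 => /eqP ->; by rewrite dbar0.
apply: (sf_T4 (Jk_ideal _ HKi) IH) => a Ha.
apply: (sf_up (sf_colon (dbar k.+1 a) HK) (ri_colon a (Jk_ideal _ HKi))) => x Kx i Hi.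
rewrite leibE; apply: ri_sum => // j.
have := ltn_ord j; rewrite ltnS => ji.
case: (leqP j k) => jk; first by apply: riM => //; exact: (Ha j jk).
have ej : nat_of_ord j = k.+1 by apply/eqP; rewrite eqn_leq (leq_trans ji Hi) jk.
have ei : i = k.+1 by apply/eqP; rewrite eqn_leq Hi -ej ji.
by rewrite ej ei subnn dbar0.
Qed.

Section Quot.
Variables (M L : lmodType E^c) (phi : (E -> Prop) -> (E -> M) -> L).
Hypothesis Hphi : is_sym_module_of_quotients iota Fl Fr phi.
Local Notation tor := (@sym_torsion R E iota Fl Fr M).
Local Notation q := (qmap phi).
Local Notation hl := (@hom_lift R E iota Fl Fr M).

Lemma ann_ideal (m : M) : is_right_idealE (fun a => eact m a = 0).
Proof.
split.
- exact: eact0r.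
- by move=> x y Hx Hy; rewrite eactBr Hx Hy subrr.
- by move=> a x Hx; rewrite eactA Hx eact0l.
Qed.

Lemma tor0 : tor 0.
Proof. apply: (sf_up sf_full (ann_ideal 0)) => x _; exact: eact0l. Qed.

Lemma tor_eq0 (m : M) : m = 0 -> tor m.
Proof. move->; exact: tor0. Qed.

Lemma torD (m m' : M) : tor m -> tor m' -> tor (m + m').
Proof.
move=> H H'; apply: (sf_up (sf_cap H H') (ann_ideal _)) => x [h h'].
by rewrite eactDl h h' addr0.
Qed.

Lemma torN (m : M) : tor m -> tor (- m).
Proof.
move=> H; apply: (sf_up H (ann_ideal _)) => x h; by rewrite eactNl h oppr0.
Qed.

Lemma torB (m m' : M) : tor m -> tor m' -> tor (m - m').
Proof. by move=> H H'; apply: torD => //; exact: torN. Qed.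

Arguments torD {m m'}.
Lemma tor_eqv (a b : M) : b = a -> tor a -> tor b.
Proof. by move->. Qed.
Arguments tor_eqv {a b}. Arguments torN {m}. Arguments torB {m m'}.

Lemma tor_eact (m : M) e : tor m -> tor (eact m e).
Proof.
move=> H; have := sf_colon e H; move/Pext; apply => x; by rewrite eactA.
Qed.

Arguments tor_eact {m} e.

Lemma Tstep (m : M) K : lF K -> (forall e, K e -> tor (eact m e)) -> tor m.
Proof.
move=> HK H; apply: (sf_T4 (ann_ideal m) HK) => a Ka.
have := H a Ka; move/Pext; apply => x; by rewrite eactA.
Qed.

Arguments Tstep {m K}.

Lemma phi_eq K f K' f' : lF K -> hl K f -> lF K' -> hl K' f' ->
  germ_eq iota Fl Fr K f K' f' -> phi K f = phi K' f'.
Proof. by case: Hphi => H _ _ _ ? ? ? ?; move/H; apply. Qed.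

Lemma phi_eq_inv K f K' f' : lF K -> hl K f -> lF K' -> hl K' f' ->
  phi K f = phi K' f' -> germ_eq iota Fl Fr K f K' f'.
Proof. by case: Hphi => H _ _ _ ? ? ? ?; move/H; apply. Qed.

Arguments phi_eq {K f K' f'}. Arguments phi_eq_inv {K f K' f'}.

Lemma phi_surj (y : L) : exists K f, [/\ lF K, hl K f & phi K f = y].
Proof. by case: Hphi => _ H _ _; apply: H. Qed.

Lemma phi_add K f K' f' : lF K -> hl K f -> lF K' -> hl K' f' ->
  phi K f + phi K' f' = phi (pinter K K') (fun x => f x + f' x).
Proof. by case: Hphi => _ _ H _; apply: H. Qed.

Lemma phi_eact K f a : lF K -> hl K f ->
  eact (phi K f) a = phi (fun x => K (a * x)) (fun x => f (a * x)).
Proof. by case: Hphi => _ _ _ H; apply: H. Qed.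

Lemma hl_add K f K' f' : hl K f -> hl K' f' -> hl (pinter K K') (fun x => f x + f' x).
Proof.
move=> [H1 H2] [H1' H2']; split.
- move=> x y [Kx K'x] [Ky K'y].
  apply: (tor_eqv _ (torD (H1 _ _ Kx Ky) (H1' _ _ K'x K'y))).
  by rewrite sub3D.
- move=> x a [Kx K'x]; apply: (tor_eqv _ (torD (H2 _ a Kx) (H2' _ a K'x))).
  by rewrite eactDl sub2D.
Qed.

Arguments hl_add {K f K' f'}.

Lemma hl_full (m : M) : hl (@pfull E) (fun x => eact m x).
Proof.
split => [x y _ _|x a _]; apply: tor_eq0; first by rewrite eactDr (addrC (eact m x)) addrK subrr.
by rewrite eactA subrr.
Qed.

Lemma hl_colon K f a : is_right_idealE K -> hl K f -> hl (fun x => K (a * x)) (fun x => f (a * x)).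
Proof.
move=> HK [H1 H2]; split.
- by move=> x y Kx Ky; rewrite mulrDr; apply: H1.
- by move=> x b Kx; rewrite mulrA; apply: H2.
Qed.

Arguments hl_colon {K f} a.

Lemma germ_simple K f K' f' K'' : lF K'' -> psubset K'' K -> psubset K'' K' ->
  (forall x, K'' x -> tor (f x - f' x)) -> germ_eq iota Fl Fr K f K' f'.
Proof. by move=> H1 H2 H3 H4; exists K''; split => // x Kx; split; [exact: H2 | exact: H3]. Qed.

Arguments germ_simple {K f K' f' K''}.

Lemma phi0 : phi (@pfull E) (fun _ => 0) = 0.
Proof.
have hz : hl (@pfull E) (fun _ : E => (0 : M)) by have := hl_full 0; rewrite /hom_lift;
  move=> [H1 H2]; split=> *; apply: tor_eq0; rewrite ?subrr ?eact0l ?subr0 //.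
apply: (@addrI _ (phi (@pfull E) (fun _ => 0))); rewrite addr0.
rewrite phi_add //; try exact: sf_full.
apply: phi_eq => //; first exact: (sf_cap sf_full sf_full).
- exact: hl_add.
- exact: sf_full.
- apply: (@germ_simple _ _ _ _ (@pfull E)) => //; first exact: sf_full.
  by move=> x _; apply: tor_eq0; rewrite addr0 subrr.
Qed.

Lemma q_add : is_additive q.
Proof.
move=> m m'; rewrite /qmap phi_add; try exact: sf_full; try exact: hl_full.
apply: phi_eq; [exact: sf_full | exact: hl_full | exact: (sf_cap sf_full sf_full) | exact: (hl_add (hl_full _) (hl_full _)) |].
apply: (@germ_simple _ _ _ _ (@pfull E)) => //; first exact: sf_full.
by move=> x _; apply: tor_eq0; rewrite eactDl subrr.
Qed.

Lemma q_eact (m : M) a : eact (q m) a = q (eact m a).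
Proof.
rewrite /qmap phi_eact; [|exact: sf_full|exact: hl_full].
apply: phi_eq; [exact: (sf_colon a sf_full) | exact: (hl_colon a (sf_ideal sf_full) (hl_full m)) | exact: sf_full | exact: hl_full |].
apply: (@germ_simple _ _ _ _ (@pfull E)) => //; first exact: sf_full.
by move=> x _; apply: tor_eq0; rewrite eactA subrr.
Qed.

Lemma q0 : q 0 = 0.
Proof. exact: (additive0 q_add). Qed.
Lemma qB m m' : q (m - m') = q m - q m'.
Proof. exact: (additiveB q_add). Qed.
Lemma q_sum n (F : 'I_n -> M) : q (\sum_(i < n) F i) = \sum_(i < n) q (F i).
Proof. exact: (additive_sum q_add). Qed.

Lemma tor_q0 (m : M) : tor m -> q m = 0.
Proof.
move=> H; rewrite -phi0; apply: phi_eq; [exact: sf_full | exact: hl_full | exact: sf_full | |].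
  by split => *; apply: tor_eq0; rewrite ?subrr ?eact0l ?subr0.
apply: (germ_simple H) => // x Hx; apply: tor_eq0; by rewrite Hx subrr.
Qed.

Lemma q0_tor (m : M) : q m = 0 -> tor m.
Proof.
rewrite -phi0 => H.
have hz : hl (@pfull E) (fun _ : E => (0 : M)) by split => *; apply: tor_eq0; rewrite ?subrr ?eact0l ?subr0.
case: (phi_eq_inv sf_full (hl_full m) sf_full hz H) => K'' [HK'' _ HH].
apply: (Tstep HK'') => e /HH; by rewrite subr0.
Qed.

Lemma phi_act K f x : lF K -> hl K f -> K x -> eact (phi K f) x = q (f x).
Proof.
move=> HK Hf Kx; rewrite phi_eact //.
apply: phi_eq; [exact: (sf_colon x HK) | exact: (hl_colon x (sf_ideal HK) Hf) | exact: sf_full | exact: hl_full |].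
apply: (@germ_simple _ _ _ _ (@pfull E)) => //; first exact: sf_full.
- by move=> z _; apply: riM => //; exact: sf_ideal.
- by move=> z _; case: Hf => _ H; apply: H.
Qed.

Arguments phi_act {K f x}.

Lemma L_tf (z : L) K : lF K -> (forall x, K x -> eact z x = 0) -> z = 0.
Proof.
move=> HK Hz; case: (phi_surj z) => K0 [f0 [HK0 Hf0 Ez]]; rewrite -Ez in Hz *.
rewrite -phi0; apply: phi_eq => //; [exact: sf_full | |].
  by split => *; apply: tor_eq0; rewrite ?subrr ?eact0l ?subr0.
apply: (germ_simple (sf_cap HK HK0)) => //.
- by move=> x [].
- move=> x [Kx K0x]; rewrite subr0; apply: q0_tor.
  rewrite -(phi_act HK0 Hf0 K0x); exact: Hz x Kx.
Qed.

Arguments L_tf {z K}.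

Lemma L_ext (z z' : L) K : lF K -> (forall x, K x -> eact z x = eact z' x) -> z = z'.
Proof.
move=> HK H; apply/eqP; rewrite -subr_eq0; apply/eqP; apply: (L_tf HK) => x Kx.
by rewrite eactBl H // subrr.
Qed.

Arguments L_ext {z z' K}.

Fixpoint S (N : nat) (B : E -> Prop) (j : nat) : E -> Prop :=
  match j with 0 => B | j'.+1 => Jk (S N B j') N end.

Lemma S_sf N B j : lF B -> lF (S N B j).
Proof. by move=> HB; elim: j => [|j IH] //=; exact: Jk_sf. Qed.

Lemma S_ideal N B j : is_right_idealE B -> is_right_idealE (S N B j).
Proof. by move=> HB; elim: j => [|j IH] //=; exact: Jk_ideal. Qed.

Lemma S_dbar N B j x i : S N B j.+1 x -> (i <= N)%N -> S N B j (dbar i x).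
Proof. by move=> H Hi; apply: H. Qed.

Lemma S_dec N B j x : S N B j.+1 x -> S N B j x.
Proof. by move=> H; have := H 0%N (leq0n _); rewrite dbar0. Qed.

Lemma S_le N B j k x : (j <= k)%N -> S N B k x -> S N B j x.
Proof.
move=> jk; elim: k jk x => [|k IH] jk x; first by rewrite leqn0 in jk; move/eqP: jk => ->.
move=> Hx; move: jk; rewrite leq_eqVlt; case/orP => [/eqP -> //|]; rewrite ltnS => jk.
by apply: IH => //; exact: S_dec.
Qed.

Lemma S_B N B j x : S N B j x -> B x.
Proof. by move=> H; exact: (@S_le N B 0 j x (leq0n j) H). Qed.

Lemma S_mono N (B B' : E -> Prop) j : psubset B B' -> psubset (S N B j) (S N B' j).
Proof. by move=> sub; elim: j => [|j IH] //= x H i Hi; apply: IH; apply: H. Qed.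

Lemma S_dbar' N B k j x i : S N B k x -> (j < k)%N -> (i <= N)%N -> S N B j (dbar i x).
Proof.
case: k => [|k] // H jk Hi; apply: (@S_le N B j k) => //; exact: S_dbar.
Qed.

Lemma S_dbarB N B m x l : S N B m x -> (l <= m)%N -> (l <= N)%N -> B (dbar l x).
Proof.
case: l => [|l] H lm lN; first by rewrite dbar0; exact: S_B H.
case: m H lm => [|m] // H lm; apply: (@S_B N B m); exact: S_dbar.
Qed.

Arguments S_sf N {B} j. Arguments S_ideal N {B} j. Arguments S_dbar {N B j x i}.
Arguments S_dec {N B j x}. Arguments S_le {N B j k x}. Arguments S_B {N B j x}.
Arguments S_mono {N B B'} j. Arguments S_dbar' {N B k j x i}. Arguments S_dbarB {N B m x l}.

Lemma lF_forall (P : nat -> E -> Prop) n : (forall k, lF (P k)) ->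
  lF (fun x => forall k, (k <= n)%N -> P k x).
Proof.
move=> HP; elim: n => [|n IH].
  apply: (Pext (HP 0%N)) => x; split => [H k|H]; last exact: H.
  by rewrite leqn0 => /eqP ->.
apply: (Pext (sf_cap IH (HP n.+1))) => x; split.
- move=> [H1 H2] k; rewrite leq_eqVlt => /orP [/eqP -> //|]; rewrite ltnS; exact: H1.
- by move=> H; split => [k kn|]; apply: H => //; exact: leqW.
Qed.

Variable D : nat -> M -> M.
Hypothesis HD : is_Delta_hder iota d D.

Lemma tor_sum n (F : 'I_n -> M) : (forall i, tor (F i)) -> tor (\sum_(i < n) F i).
Proof. move=> H; elim/big_ind: _ => //; [exact: tor0 | move=> ? ?; exact: torD]. Qed.

Lemma D_tor n (m : M) : tor m -> tor (D n m).
Proof.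
elim/ltn_ind: n m => n IH m Hm; apply: (Tstep Hm) => e He.
have := DruleE HD e n m; rewrite He (Dz HD) big_ord_recr /= subnn dbar0.
move/esym/eqP; rewrite addrC addr_eq0 => /eqP ->.
apply: torN; apply: tor_sum => i; apply: tor_eact; apply: IH => //; exact: ltn_ord.
Qed.

Definition inQ (z : L) := exists m, q m = z.
Definition pickM (z : L) : M := epsilon (inhabits 0) (fun m => q m = z).
Lemma pickM_spec z : inQ z -> q (pickM z) = z.
Proof. by move=> H; apply: (epsilon_spec (inhabits 0) (fun m => q m = z) H). Qed.

Definition Dq n z := q (D n (pickM z)).

Lemma Dq_q n m : Dq n (q m) = q (D n m).
Proof.
rewrite /Dq; have e : q (pickM (q m)) = q m by apply: pickM_spec; exists m.
apply/eqP; rewrite -subr_eq0 -qB -(DB HD); apply/eqP; apply: tor_q0.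
apply: D_tor; apply: q0_tor; by rewrite qB e subrr.
Qed.

Lemma inQ_q m : inQ (q m).
Proof. by exists m. Qed.
Lemma inQ_add z z' : inQ z -> inQ z' -> inQ (z + z').
Proof. by move=> [m <-] [m' <-]; exists (m + m'); rewrite q_add. Qed.
Lemma inQ_B z z' : inQ z -> inQ z' -> inQ (z - z').
Proof. by move=> [m <-] [m' <-]; exists (m - m'); rewrite qB. Qed.
Lemma inQ_0 : inQ 0.
Proof. by exists 0; rewrite q0. Qed.
Lemma inQ_sum n (F : 'I_n -> L) : (forall i, inQ (F i)) -> inQ (\sum_(i < n) F i).
Proof. move=> H; elim/big_ind: _ => //; [exact: inQ_0 | exact: inQ_add]. Qed.
Lemma inQ_eact z e : inQ z -> inQ (eact z e).
Proof. by move=> [m <-]; exists (eact m e); rewrite q_eact. Qed.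

Lemma Dq_add n z z' : inQ z -> inQ z' -> Dq n (z + z') = Dq n z + Dq n z'.
Proof. by move=> [m <-] [m' <-]; rewrite -q_add !Dq_q (DD HD) q_add. Qed.
Lemma Dq_id z : inQ z -> Dq 0%N z = z.
Proof. by move=> [m <-]; rewrite Dq_q (D0 HD). Qed.
Lemma Dq_eact n z a : inQ z -> Dq n (eact z a) = \sum_(i < n.+1) eact (Dq i z) (dbar (n - i) a).
Proof.
move=> [m <-]; rewrite q_eact Dq_q (DruleE HD) q_sum; apply: eq_bigr => i _.
by rewrite Dq_q q_eact.
Qed.

Definition Q (y : L) := fun x => inQ (eact y x).

Lemma Q_ideal y : is_right_idealE (Q y).
Proof.
split.
- by rewrite /Q eact0r; exact: inQ_0.
- by move=> x x' H H'; rewrite /Q eactBr; exact: inQ_B.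
- by move=> a x H; rewrite /Q eactA; exact: inQ_eact.
Qed.

Lemma Q_sf y : lF (Q y).
Proof.
case: (phi_surj y) => K [f [HK Hf Ey]].
apply: (sf_up HK (Q_ideal y)) => x Kx; rewrite /Q -Ey (phi_act HK Hf Kx); exact: inQ_q.
Qed.

Fixpoint Gt (y : L) (n : nat) : nat -> E -> L :=
  match n with
  | 0%N => fun _ x => Dq 0%N (eact y x)
  | n'.+1 => fun k x => if (k <= n')%N then Gt y n' k x
             else Dq k (eact y x) - \sum_(j < k) Gt y n' j (dbar (k - j) x)
  end.
Definition G y n x := Gt y n n x.

Lemma Gt_stable y n k : (k <= n)%N -> Gt y n k = G y k.
Proof.
elim: n k => [|n IH] k; first by rewrite leqn0 => /eqP ->.
rewrite leq_eqVlt => /orP [/eqP -> //|]; rewrite ltnS => kn.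
by rewrite /= kn; apply: IH.
Qed.

Lemma Grec y n x : G y n x = Dq n (eact y x) - \sum_(j < n) G y j (dbar (n - j) x).
Proof.
case: n => [|n]; first by rewrite big_ord0 subr0.
rewrite /G /= ltnn; congr (_ - _); apply: eq_bigr => j _; rewrite Gt_stable //.
by rewrite -ltnS.
Qed.

Lemma Grec' y n x : \sum_(j < n.+1) G y j (dbar (n - j) x) = Dq n (eact y x).
Proof. by rewrite big_ord_recr /= subnn dbar0 [G y n x]Grec addrC subrK. Qed.

Lemma G_inQ y n x : inQ (G y n x).
Proof.
elim/ltn_ind: n x => n IH x; rewrite Grec; apply: inQ_B; first by exists (D n (pickM (eact y x))).
apply: inQ_sum => j; apply: IH; exact: ltn_ord.
Qed.

Lemma Gadd y N n : (n <= N)%N -> forall x x', S N (Q y) n x -> S N (Q y) n x' ->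
  G y n (x + x') = G y n x + G y n x'.
Proof.
elim/ltn_ind: n => n IH nN x x' Hx Hx'.
rewrite !Grec eactDr Dq_add; [|exact: (S_B Hx)|exact: (S_B Hx')].
rewrite (eq_bigr (fun j : 'I_n => G y j (dbar (n - j) x) + G y j (dbar (n - j) x'))).
  by rewrite big_split sub2D.
move=> j _; rewrite dbarD; apply: IH => //.
- exact: leq_trans (ltnW (ltn_ord j)) nN.
- by apply: (S_dbar' Hx) => //; rewrite leq_subLR (leq_trans nN) // leq_addl.
- by apply: (S_dbar' Hx') => //; rewrite leq_subLR (leq_trans nN) // leq_addl.
Qed.

Arguments Gadd {y N n}.

Lemma G0 y N n : (n <= N)%N -> G y n 0 = 0.
Proof.
move=> nN; have h : S N (Q y) n 0 by apply: ri0; apply: S_ideal; exact: Q_ideal.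
by apply: (@addrI _ (G y n 0)); rewrite -(Gadd nN _ _ h h) !addr0.
Qed.

Arguments G0 {y N n}.

Lemma G_sum y N n k (F : 'I_k -> E) : (n <= N)%N -> (forall i, S N (Q y) n (F i)) ->
  G y n (\sum_(i < k) F i) = \sum_(i < k) G y n (F i).
Proof.
move=> nN; have HS := S_ideal N n (Q_ideal y).
elim: k F => [|k IH] F HF; first by rewrite !big_ord0 (G0 nN).
rewrite !big_ord_recr /= (Gadd nN); first by rewrite IH.
- by apply: ri_sum.
- exact: HF.
Qed.

Arguments G_sum {y N n k F}.

Lemma Gmul y N n : (n <= N)%N -> forall x a, S N (Q y) n x ->
  G y n (x * a) = eact (G y n x) a.
Proof.
elim/ltn_ind: n => n IH nN x a Hx.
pose F j k := eact (G y j (dbar k x)) (dbar (n - j - k) a).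
have key := Grec' y n (x * a).
have R1 : Dq n (eact y (x * a)) = \sum_(j < n.+1) \sum_(k < (n - j).+1) F j k.
  rewrite eactA Dq_eact; last exact: (S_B Hx).
  rewrite -(@sum_tri _ n F); apply: eq_bigr => m _.
  rewrite -Grec' eact_suml; apply: eq_bigr => j _; rewrite /F.
  have := ltn_ord j; have := ltn_ord m => ? ?.
  by have -> : (n - j - (m - j) = n - m)%N by lia.
have L1 : forall j : 'I_n, G y j (dbar (n - j) (x * a)) = \sum_(k < (n - j).+1) F j k.
  move=> j; have jn := ltn_ord j; have jN : (j <= N)%N by exact: leq_trans (ltnW jn) nN.
  rewrite leibE (G_sum jN).
    apply: eq_bigr => k _; rewrite /F (IH j jn jN) //.
    apply: (S_dbar' Hx) => //; have := ltn_ord k; rewrite ltnS => kn.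
    apply: leq_trans kn _; apply: leq_trans nN; exact: leq_subr.
  move=> k; apply: riM; first exact: (S_ideal N j (Q_ideal y)).
  apply: (S_dbar' Hx) => //; have := ltn_ord k; rewrite ltnS => kn.
  apply: leq_trans kn _; apply: leq_trans nN; exact: leq_subr.
move: key; rewrite R1 big_ord_recr /= subnn dbar0 (eq_bigr _ (fun j _ => L1 j)).
rewrite [in RHS]big_ord_recr /= subnn big_ord1 /F subnn dbar0 dbar0 => /addrI.
done.
Qed.

Arguments Gmul {y N n}.

Lemma Guniq y (B : E -> Prop) N (H : nat -> E -> L) :
  (forall n, (n <= N)%N -> forall x, S N B n x ->
     \sum_(j < n.+1) H j (dbar (n - j) x) = Dq n (eact y x)) ->
  forall n, (n <= N)%N -> forall x, S N B n x -> H n x = G y n x.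
Proof.
move=> Hrec; elim/ltn_ind => n IH nN x Hx.
have := Hrec n nN x Hx; rewrite big_ord_recr /= subnn dbar0 => e.
rewrite Grec -e [X in _ - X](eq_bigr (fun j : 'I_n => H j (dbar (n - j) x))); first by rewrite [RHS]addrC addKr.
move=> j _; symmetry; apply: IH; first exact: ltn_ord.
  exact: leq_trans (ltnW (ltn_ord j)) nN.
by apply: (S_dbar' Hx) => //; rewrite leq_subLR (leq_trans nN) // leq_addl.
Qed.

Definition Dbar n y : L :=
  epsilon (inhabits 0) (fun z => exists K, lF K /\ forall x, K x -> eact z x = G y n x).

Lemma Dbar_spec n y : exists K, lF K /\ forall x, K x -> eact (Dbar n y) x = G y n x.
Proof.
apply: (epsilon_spec (inhabits 0) (fun z => exists K, lF K /\ forall x, K x -> eact z x = G y n x)).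
pose K := S n (Q y) n; pose F x := pickM (G y n x).
have HK : lF K by apply: S_sf; exact: Q_sf.
have qF x : q (F x) = G y n x by apply: pickM_spec; exact: G_inQ.
have HF : hl K F.
  split.
  - move=> x x' Kx Kx'; apply: q0_tor; rewrite !qB !qF (Gadd (leqnn n) _ _ Kx Kx').
    by rewrite (addrC (G y n x)) addrK subrr.
  - move=> x a Kx; apply: q0_tor; rewrite qB -q_eact !qF (Gmul (leqnn n) _ _ Kx) subrr //.
exists (phi K F), K; split => // x Kx; by rewrite (phi_act HK HF Kx).
Qed.

Lemma Dbar_test y N n : (n <= N)%N -> forall x, S N (Q y) n x -> eact (Dbar n y) x = G y n x.
Proof.
move=> nN x Hx; case: (Dbar_spec n y) => K [HK HKe].
apply: (L_ext (sf_colon x HK)) => w Kxw.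
by rewrite -eactA HKe // (Gmul nN _ _ Hx).
Qed.

Lemma Delta_of_rule (N : lmodType E^c) (D' : nat -> N -> N) :
  (forall x, D' 0%N x = x) -> (forall n, is_additive (D' n)) ->
  (forall n m e, D' n (eact m e) = \sum_(i < n.+1) eact (D' i m) (dbar (n - i) e)) ->
  is_Delta_hder iota d D'.
Proof.
move=> H0 HA HR; split => //.
- by move=> n m r; rewrite /ract HR; apply: eq_bigr => i _; rewrite dbar_iotal.
- move=> n m r; rewrite /lact HR.
  rewrite (@sum_rev _ n (fun i => eact (D' i m) (dbar (n - i) (iota 1 r)))).
  by apply: eq_bigr => i _; rewrite dbar_iotar subKn // -ltnS.
Qed.

Lemma Dbar0 y : Dbar 0%N y = y.
Proof.
apply: (L_ext (Q_sf y)) => x Qx.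
rewrite (@Dbar_test y 0%N 0%N) // Grec big_ord0 subr0 Dq_id //.
Qed.

Lemma G_addy y y' N n : (n <= N)%N -> forall x, S N (pinter (Q y) (Q y')) n x ->
  G (y + y') n x = G y n x + G y' n x.
Proof.
move=> nN x Hx; symmetry.
apply: (@Guniq (y + y') (pinter (Q y) (Q y')) N (fun j x => G y j x + G y' j x)) => //.
move=> m mN w Hw; rewrite big_split /= !Grec' eactDl Dq_add //.
- by case: (S_B Hw).
- by case: (S_B Hw).
Qed.

Lemma DbarD n : is_additive (Dbar n).
Proof.
move=> y y'.
have HT : lF (S n (pinter (Q y) (Q y')) n) by apply: S_sf; apply: sf_cap; exact: Q_sf.
apply: (L_ext HT) => x Hx; rewrite eactDl.
rewrite (@Dbar_test (y + y') n n) //; last first.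
  apply: (S_mono n _ _ Hx) => w [Hw Hw']; rewrite /Q eactDl; exact: inQ_add.
rewrite (@Dbar_test y n n) //; last by apply: (S_mono n _ _ Hx) => w [].
rewrite (@Dbar_test y' n n) //; last by apply: (S_mono n _ _ Hx) => w [].
exact: (@G_addy y y' n n (leqnn n) x Hx).
Qed.

Definition Bset y e n := fun x => forall k, (k <= n)%N -> S n (Q y) n (dbar k e * x).

Lemma Bset_sf y e n : lF (Bset y e n).
Proof.
apply: lF_forall => k; apply: sf_colon; apply: S_sf; exact: Q_sf.
Qed.

Lemma G_ye y e n : forall x, S n (Bset y e n) n x ->
  G (eact y e) n x = \sum_(i < n.+1) G y i (dbar (n - i) e * x).
Proof.
move=> x Hx; symmetry.
apply: (@Guniq (eact y e) (Bset y e n) n (fun j x => \sum_(i < j.+1) G y i (dbar (j - i) e * x))) => //.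
move=> m mn w Hw.
pose F i k := G y i (dbar k e * dbar (m - i - k) w).
rewrite -eactA -Grec'.
rewrite (eq_bigr (fun j : 'I_m.+1 => \sum_(i < j.+1) F i (j - i)%N)); last first.
  move=> j _; apply: eq_bigr => i _; rewrite /F.
  have := ltn_ord i; have := ltn_ord j => ? ?.
  by have -> : (m - i - (j - i) = m - j)%N by lia.
rewrite (@sum_tri _ m F); apply: eq_bigr => i _.
have im := ltn_ord i; rewrite ltnS in im.
rewrite leibE (@G_sum y n i).
- by apply: eq_bigr => k _; rewrite /F.
- exact: leq_trans im mn.
move=> k; have := ltn_ord k; rewrite ltnS => km.
have kn : (k <= n)%N by apply: leq_trans km _; apply: leq_trans (leq_subr _ _) mn.
apply: (@S_le n (Q y) i n); first exact: leq_trans im mn.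
apply: (S_dbarB Hw); lia.
Qed.

Lemma Dbar_rule n y e : Dbar n (eact y e) = \sum_(i < n.+1) eact (Dbar i y) (dbar (n - i) e).
Proof.
have HT : lF (S n (Bset y e n) n) by apply: S_sf; exact: Bset_sf.
apply: (L_ext HT) => x Hx.
rewrite (@Dbar_test (eact y e) n n) //; last first.
  apply: (S_mono n _ _ Hx) => w Hw; have := S_B (Hw 0%N (leq0n n)).
  by rewrite dbar0 /Q eactA.
rewrite G_ye // eact_suml; apply: eq_bigr => i _.
have ni : (n - i <= n)%N by exact: leq_subr.
have iN : (i <= n)%N by rewrite -ltnS.
rewrite -eactA (@Dbar_test y n i) //.
apply: (@S_le n (Q y) i n) => //; exact: (S_B Hx (n - i)%N ni).
Qed.

Lemma Dbar_Delta : is_Delta_hder iota d Dbar.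
Proof. apply: Delta_of_rule; [exact: Dbar0 | exact: DbarD | move=> *; exact: Dbar_rule]. Qed.

Lemma Dbar_q n m : Dbar n (q m) = q (D n m).
Proof.
have HT : lF (S n (Q (q m)) n) by apply: S_sf; exact: Q_sf.
apply: (L_ext HT) => x Hx; rewrite (@Dbar_test (q m) n n) // q_eact; symmetry.
apply: (@Guniq (q m) (Q (q m)) n (fun j x => q (eact (D j m) x))) => //.
move=> k kn w Hw; rewrite -q_sum -(DruleE HD) -Dq_q q_eact //.
Qed.

Lemma U_test (D' : nat -> L -> L) : is_Delta_hder iota d D' ->
  (forall n m, D' n (q m) = q (D n m)) ->
  forall y N n, (n <= N)%N -> forall x, S N (Q y) n x -> eact (D' n y) x = G y n x.
Proof.
move=> HD' HDq y N n nN x Hx.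
apply: (@Guniq y (Q y) N (fun j x => eact (D' j y) x)) => // k kN w Hw.
rewrite -(DruleE HD'); case: (S_B Hw) => m' Em.
by rewrite -Em HDq Dq_q.
Qed.

Lemma Dbar_uniq (D' : nat -> L -> L) : is_Delta_hder iota d D' ->
  (forall n m, D' n (q m) = q (D n m)) -> forall n y, D' n y = Dbar n y.
Proof.
move=> HD' HDq n y.
have HT : lF (S n (Q y) n) by apply: S_sf; exact: Q_sf.
apply: (L_ext HT) => x Hx.
by rewrite (@U_test D' HD' HDq y n n (leqnn n) x Hx) (@Dbar_test y n n).
Qed.
End Quot.
End Filt.

Section P3.
Variables Fl1 Fr1 Fl2 Fr2 : (R -> Prop) -> Prop.
Hypotheses (HFl1 : left_Gabriel_filter Fl1) (HFr1 : right_Gabriel_filter Fr1)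
  (HFl2 : left_Gabriel_filter Fl2) (HFr2 : right_Gabriel_filter Fr2).
Hypothesis Hsub : psubset (sym_filter iota Fl1 Fr1) (sym_filter iota Fl2 Fr2).
Variables (M L1 L2 : lmodType E^c) (phi1 : (E -> Prop) -> (E -> M) -> L1)
  (phi2 : (E -> Prop) -> (E -> M) -> L2).
Hypotheses (Hphi1 : is_sym_module_of_quotients iota Fl1 Fr1 phi1)
  (Hphi2 : is_sym_module_of_quotients iota Fl2 Fr2 phi2).
Variable q12 : L1 -> L2.
Hypothesis Hq12 : forall K f, sym_filter iota Fl1 Fr1 K -> hom_lift iota Fl1 Fr1 K f ->
          q12 (phi1 K f) = phi2 K f.
Variable D : nat -> M -> M.
Hypothesis HD : is_Delta_hder iota d D.

Lemma q12_hl (K : E -> Prop) (f : E -> M) : hom_lift iota Fl1 Fr1 K f -> hom_lift iota Fl2 Fr2 K f.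
Proof. by case=> H1 H2; split => *; apply: Hsub; [apply: H1 | apply: H2]. Qed.

Lemma q12_add : is_additive q12.
Proof.
move=> z z'.
case: (phi_surj _ _ _ _ _ Hphi1 z) => K [f [HK Hf <-]].
case: (phi_surj _ _ _ _ _ Hphi1 z') => K' [f' [HK' Hf' <-]].
rewrite (phi_add _ _ _ _ _ Hphi1) // Hq12; last first.
- exact: hl_add.
- exact: sf_cap.
rewrite !Hq12 // (phi_add _ _ _ _ _ Hphi2) //; try exact: q12_hl; exact: Hsub.
Qed.

Lemma q12_eact z e : q12 (eact z e) = eact (q12 z) e.
Proof.
case: (phi_surj _ _ _ _ _ Hphi1 z) => K [f [HK Hf <-]].
rewrite (phi_eact _ _ _ _ _ Hphi1) // Hq12; last first.
- by apply: hl_colon => //; exact: (sf_ideal _ _ _ HK).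
- exact: sf_colon.
by rewrite Hq12 // (phi_eact _ _ _ _ _ Hphi2) //; [exact: Hsub | exact: q12_hl].
Qed.

Lemma q12_q m : q12 (qmap phi1 m) = qmap phi2 m.
Proof. by apply: Hq12; [apply: sf_full | apply: hl_full]. Qed.

Lemma q12_G y N n : (n <= N)%N -> forall x, S N (Q M L1 phi1 y) n x ->
  q12 (G M L1 phi1 D y n x) = G M L2 phi2 D (q12 y) n x.
Proof.
move=> nN x Hx.
apply: (Guniq M L2 phi2 D (q12 y) (Q M L1 phi1 y) N (fun j x => q12 (G M L1 phi1 D y j x))) => // k kN w Hw.
rewrite -(additive_sum q12_add) Grec'.
case: (S_B _ _ _ _ Hw) => m Em.
rewrite -q12_eact -Em q12_q !(Dq_q _ _ HFl1 HFr1 _ _ _ Hphi1 _ HD) (Dq_q _ _ HFl2 HFr2 _ _ _ Hphi2 _ HD) q12_q //.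
Qed.

Lemma part3 (D1 : nat -> L1 -> L1) (D2 : nat -> L2 -> L2) :
  is_Delta_hder iota d D1 -> (forall n m, D1 n (qmap phi1 m) = qmap phi1 (D n m)) ->
  is_Delta_hder iota d D2 -> (forall n m, D2 n (qmap phi2 m) = qmap phi2 (D n m)) ->
  forall n y, q12 (D1 n y) = D2 n (q12 y).
Proof.
move=> HD1 HD1q HD2 HD2q n y.
have HT : sym_filter iota Fl1 Fr1 (S n (Q M L1 phi1 y) n).
  apply: S_sf => //; exact: Q_sf.
apply: (L_ext _ _ HFl2 HFr2 _ _ _ Hphi2 _ _ _ (Hsub _ HT)) => x Hx.
rewrite -q12_eact (U_test _ _ HFl1 HFr1 _ _ _ Hphi1 _ HD _ HD1 HD1q y n n (leqnn n) x Hx).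
rewrite (U_test _ _ HFl2 HFr2 _ _ _ Hphi2 _ HD _ HD2 HD2q (q12 y) n n (leqnn n) x).
  exact: (@q12_G y n n (leqnn n) x Hx).
apply: (S_mono n _ _ n _ x Hx) => w [m Em]; exists m; by rewrite /= -q12_eact -Em q12_q.
Qed.
End P3.
End Env.

Theorem corollary5p1 (R E : pzRingType) (iota : R -> R -> E)
    (Hiota : is_enveloping_tensor iota)
    (d : nat -> R -> R) (Hd : is_higher_derivation d)
    (dbar : nat -> E -> E) (Hdbar : is_induced_hder iota d dbar) :
  (* (1) lFr is higher derivation invariant *)
  (forall Fl Fr, left_Gabriel_filter Fl -> right_Gabriel_filter Fr ->
     forall I, sym_filter iota Fl Fr I -> forall n : nat,
       exists J, sym_filter iota Fl Fr J /\
         (forall i : nat, (i <= n)%N -> forall x, J x -> I (dbar i x)))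
  /\
  (* (2) unique extension of Delta-higher derivations to lM_r *)
  (forall Fl Fr, left_Gabriel_filter Fl -> right_Gabriel_filter Fr ->
     forall (M : lmodType E^c) (L : lmodType E^c)
            (phi : (E -> Prop) -> (E -> M) -> L),
       is_sym_module_of_quotients iota Fl Fr phi ->
       forall D : nat -> M -> M, is_Delta_hder iota d D ->
       exists Dbar : nat -> L -> L,
         (is_Delta_hder iota d Dbar /\
          forall n m, Dbar n (qmap phi m) = qmap phi (D n m)) /\
         (forall Dbar' : nat -> L -> L,
            is_Delta_hder iota d Dbar' ->
            (forall n m, Dbar' n (qmap phi m) = qmap phi (D n m)) ->
            forall n y, Dbar' n y = Dbar n y))
  /\
  (* (3) compatibility with the canonical map q12 for lF1r <= lF2r *)
  (forall Fl1 Fr1 Fl2 Fr2,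
     left_Gabriel_filter Fl1 -> right_Gabriel_filter Fr1 ->
     left_Gabriel_filter Fl2 -> right_Gabriel_filter Fr2 ->
     psubset (sym_filter iota Fl1 Fr1) (sym_filter iota Fl2 Fr2) ->
     forall (M : lmodType E^c)
            (L1 : lmodType E^c) (phi1 : (E -> Prop) -> (E -> M) -> L1)
            (L2 : lmodType E^c) (phi2 : (E -> Prop) -> (E -> M) -> L2),
       is_sym_module_of_quotients iota Fl1 Fr1 phi1 ->
       is_sym_module_of_quotients iota Fl2 Fr2 phi2 ->
       forall q12 : L1 -> L2,
       (forall K f, sym_filter iota Fl1 Fr1 K -> hom_lift iota Fl1 Fr1 K f ->
          q12 (phi1 K f) = phi2 K f) ->
       forall D : nat -> M -> M, is_Delta_hder iota d D ->
       forall (D1 : nat -> L1 -> L1) (D2 : nat -> L2 -> L2),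
         is_Delta_hder iota d D1 ->
         (forall n m, D1 n (qmap phi1 m) = qmap phi1 (D n m)) ->
         is_Delta_hder iota d D2 ->
         (forall n m, D2 n (qmap phi2 m) = qmap phi2 (D n m)) ->
         forall n y, q12 (D1 n y) = D2 n (q12 y)).
Proof.
split.
  move=> Fl Fr HFl HFr I HI n; exists (Jk _ dbar I n); split.
    exact: (Jk_sf _ _ _ Hiota _ Hd _ Hdbar _ _ HFl HFr _ _ HI).
  by move=> i Hi x Jx; apply: Jx.
split.
  move=> Fl Fr HFl HFr M L phi Hphi D HD.
  exists (Dbar _ _ iota dbar Fl Fr _ _ phi D); split.
    split; first exact: (Dbar_Delta _ _ _ Hiota _ Hd _ Hdbar _ _ HFl HFr _ _ _ Hphi _ HD).
    exact: (Dbar_q _ _ _ Hiota _ Hd _ Hdbar _ _ HFl HFr _ _ _ Hphi _ HD).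
  move=> D' HD' HD'q n y; exact: (Dbar_uniq _ _ _ Hiota _ Hd _ Hdbar _ _ HFl HFr _ _ _ Hphi _ HD _ HD' HD'q).
move=> Fl1 Fr1 Fl2 Fr2 HFl1 HFr1 HFl2 HFr2 Hsub M L1 phi1 L2 phi2 Hphi1 Hphi2 q12 Hq12 D HD D1 D2 HD1 HD1q HD2 HD2q.
exact: (part3 _ _ _ Hiota _ Hd _ Hdbar _ _ _ _ HFl1 HFr1 HFl2 HFr2 Hsub _ _ _ _ _ Hphi1 Hphi2 _ Hq12 _ HD _ _ HD1 HD1q HD2 HD2q).
Qed.
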